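(* For \(z \in \{ z \in \mathbb{C} : |\arg(z)| < \pi \}\) and \(n \in \mathbb{N}\), \[ {}_1F_1\left(\begin{matrix} 1 \\ z+1 \end{matrix}\,;\, z\right) = 1 + z + \cfrac{-z\cdot z}{(2z+2) + \cfrac{-z(z+1)}{(2z+3) + \cfrac{-z(z+2)}{(2z+4) + \cdots}}}, \] i.e. \(1+z+\mathop{\mathrm{K}}_{m=1}^{\infty}\frac{-z(m+z-1)}{m+2z+1}\), and \[ \int_0^1 (1-t)^{n-1} e^{tn}\, dt = \frac{1}{n}\left(1 + n + \mathop{\mathrm{K}}_{m=1}^{\infty}\frac{-n(m+n-1)}{m+2n+1}\right). \]
   Context: Here \(\mathop{\mathrm{K}}_{m=1}^{\infty}\frac{a_m}{b_m}\) denotes the continued fraction \(\cfrac{a_1}{b_1+\cfrac{a_2}{b_2+\cfrac{a_3}{b_3+\cdots}}}\) with partial numerators \(a_m\) and partial denominators \(b_m\); \({}_1F_1\) is the confluent hypergeometric function. *)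

(* Defs.v *)
From Stdlib Require Import Reals Factorial.
From Coquelicot Require Import Coquelicot.

Local Open Scope C_scope.

Fixpoint cpow (z : C) (k : nat) : C :=
  match k with O => 1 | S j => z * cpow z j end.

Fixpoint poch (a : C) (k : nat) : C :=
  match k with O => 1 | S j => poch a j * (a + RtoC (INR j)) end.

Definition hyp1F1_term (a b z : C) (k : nat) : C :=
  poch a k / poch b k * cpow z k / RtoC (INR (fact k)).

Definition abs_arg_lt_pi (z : C) : Prop :=
  z <> 0 /\ exists theta : R, (Rabs theta < PI)%R /\
    z = RtoC (Cmod z) * (cos theta, sin theta).

(* Wallis-Euler recurrences for the continued fraction K_{m>=1} a_m / b_m :
   returns ((A_{n-1}, A_n), (B_{n-1}, B_n)) with
   A_{-1}=1, A_0=0, B_{-1}=0, B_0=1,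
   A_n = b_n A_{n-1} + a_n A_{n-2},  B_n = b_n B_{n-1} + a_n B_{n-2}. *)
Fixpoint wallis (a b : nat -> C) (n : nat) : (C * C) * (C * C) :=
  match n with
  | O => ((RtoC 1, RtoC 0), (RtoC 0, RtoC 1))
  | S k =>
      let '((A1, A0), (B1, B0)) := wallis a b k in
      ((A0, b n * A0 + a n * A1), (B0, b n * B0 + a n * B1))
  end.

Definition cfA (a b : nat -> C) (n : nat) : C := snd (fst (wallis a b n)).
Definition cfB (a b : nat -> C) (n : nat) : C := snd (snd (wallis a b n)).

Definition cf_converges_to (a b : nat -> C) (v : C) : Prop :=
  (exists N : nat, forall n, (N <= n)%nat -> cfB a b n <> 0) /\
  filterlim (fun n => cfA a b n / cfB a b n) eventually (locally v).

(* Main.v *)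
Require Import Defs.
From Stdlib Require Import Reals Lra Lia Factorial.
From Coquelicot Require Import Coquelicot.
Local Open Scope C_scope.

Definition cc z k := cpow z k / poch (z+1) k.
Definition Bn z n := RtoC (INR (S n)) * poch (z+1) n.
Definition tt z n := cpow z (S n) / (RtoC (INR (S n)) * poch (z+1) n).
Definition gg z n := sum_n (cc z) n + tt z n - 1 - z.
Definition aa z (m : nat) := - z * (RtoC (INR m) + z - 1).
Definition bb z (m : nat) := RtoC (INR m) + 2 * z + 1.

Lemma RtoC_INR_S n : RtoC (INR (S n)) = RtoC (INR n) + 1.
Proof. rewrite S_INR, RtoC_plus. reflexivity. Qed.

Lemma INR_S_nz k : RtoC (INR (S k)) <> 0.
Proof. intro H. apply RtoC_inj in H. apply (not_0_INR (S k)); auto. Qed.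
Lemma INR_C_nz n : RtoC (INR n) + 1 <> 0.
Proof. rewrite <- RtoC_INR_S. apply INR_S_nz. Qed.
Lemma INR_C_nz2 n : RtoC (INR n) + 1 + 1 <> 0.
Proof. rewrite <- !RtoC_INR_S. apply INR_S_nz. Qed.
Lemma INR_C_nz3 n : RtoC (INR n) + 1 + 1 + 1 <> 0.
Proof. rewrite <- !RtoC_INR_S. apply INR_S_nz. Qed.

Lemma C2 : RtoC 2 = 1 + 1.
Proof. unfold Cplus, RtoC; simpl; f_equal; ring. Qed.

Lemma gg_S z n : gg z (S n) = gg z n + cc z (S n) + tt z (S n) - tt z n.
Proof. unfold gg. rewrite sum_Sn. change plus with Cplus. ring. Qed.

Lemma poch_nz z (Hz : forall k, z + RtoC (INR (S k)) <> 0) n : poch (z+1) n <> 0.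
Proof. induction n; simpl. 
  - intro H; apply RtoC_inj in H; lra.
  - apply Cmult_neq_0; auto. rewrite <- Cplus_assoc, (Cplus_comm 1), <- RtoC_INR_S. auto.
Qed.

Lemma wallis_closed z (Hz : forall k, z + RtoC (INR (S k)) <> 0) n :
  wallis (aa z) (bb z) (S n) =
  ((Bn z n * gg z n, Bn z (S n) * gg z (S n)), (Bn z n, Bn z (S n))).
Proof.
  pose proof (poch_nz z Hz) as HP.
  induction n.
  - cbn [wallis]. rewrite gg_S. unfold gg, Bn, aa, bb, tt, cc. rewrite sum_O, !RtoC_INR_S.
    cbn [poch cpow INR]. rewrite C2.
    assert (H1 : z + 1 <> 0). { specialize (Hz 0%nat). simpl INR in Hz. exact Hz. }
    f_equal; f_equal. 
    + field. auto.
    + field. auto.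
    + field.
    + field.
  - change (wallis (aa z) (bb z) (S (S n))) with
      (let '((A1, A0), (B1, B0)) := wallis (aa z) (bb z) (S n) in
      ((A0, bb z (S (S n)) * A0 + aa z (S (S n)) * A1), (B0, bb z (S (S n)) * B0 + aa z (S (S n)) * B1))).
    rewrite IHn. rewrite (gg_S z (S n)), (gg_S z n).
    assert (Hw1 := Hz n). assert (Hw2 := Hz (S n)).
    assert (HPn := HP n).
    unfold Bn, aa, bb, tt, cc. rewrite !RtoC_INR_S in *. cbn [poch cpow]. rewrite C2.
    rewrite !RtoC_INR_S in *.
    assert (H3 := INR_C_nz n). assert (H4 := INR_C_nz2 n). assert (H5 := INR_C_nz3 n).
    f_equal; f_equal; field; repeat split; auto;
    try (rewrite <- Cplus_assoc, (Cplus_comm 1); auto);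
    try (replace (z + 1 + (RtoC (INR n) + 1)) with (z + (RtoC (INR n) + 1 + 1)) by ring; auto).
Qed.

Lemma zk_nz z (Hz : forall k, z + RtoC (INR (S k)) <> 0) n : z + 1 + RtoC (INR n) <> 0.
Proof. replace (z + 1 + RtoC (INR n)) with (z + RtoC (INR (S n))). auto.
  rewrite RtoC_INR_S. ring. Qed.

Lemma cc_S z (Hz : forall k, z + RtoC (INR (S k)) <> 0) n :
  cc z (S n) = cc z n * (z / (z + 1 + RtoC (INR n))).
Proof. unfold cc. cbn [cpow poch]. pose proof (poch_nz z Hz n). pose proof (zk_nz z Hz n).
  field. auto. Qed.

Lemma C1_nz : (1 : C) <> 0.
Proof. intro H; apply RtoC_inj in H; lra. Qed.

Lemma cc_nz z (Hz : forall k, z + RtoC (INR (S k)) <> 0) (z0 : z <> 0) n : cc z n <> 0.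
Proof. induction n.
  - replace (cc z 0) with (RtoC 1) by (unfold cc; simpl; field). apply C1_nz.
  - rewrite (cc_S z Hz). apply Cmult_neq_0; auto.
    pose proof (zk_nz z Hz n) as Hk. intro H. apply z0.
    replace z with (z / (z + 1 + RtoC (INR n)) * (z + 1 + RtoC (INR n))) by (field; auto).
    rewrite H; ring.
Qed.

Lemma Cmod_zk_infty z : is_lim_seq (fun n => Cmod (z + 1 + RtoC (INR n))) p_infty.
Proof.
  apply is_lim_seq_spec. intro M.
  pose proof is_lim_seq_INR as H. apply is_lim_seq_spec in H.
  destruct (H (M + Cmod z)%R) as [N HN]. exists N. intros n Hn. specialize (HN n Hn).
  assert (T := Cmod_triangle (z + 1 + RtoC (INR n)) (- z)).
  rewrite Cmod_opp in T.
  replace (z + 1 + RtoC (INR n) + - z) with (RtoC (1 + INR n)) in T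
    by (rewrite RtoC_plus; ring).
  rewrite Cmod_R, Rabs_pos_eq in T by (pose proof (pos_INR n); lra). lra.
Qed.

Lemma ratio_lim z : is_lim_seq (fun n => (Cmod z / Cmod (z + 1 + RtoC (INR n)))%R) 0.
Proof.
  pose proof (is_lim_seq_inv _ _ (Cmod_zk_infty z)) as H.
  assert (H' : is_lim_seq (fun n => (Cmod z * / Cmod (z + 1 + RtoC (INR n)))%R)
     (Rbar_mult (Cmod z) (Rbar_inv p_infty))).
  { apply is_lim_seq_scal_l. apply H. discriminate. }
  simpl in H'. rewrite Rmult_0_r in H'. exact H'.
Qed.

Lemma ex_series_cc z (Hz : forall k, z + RtoC (INR (S k)) <> 0) (z0 : z <> 0) :
  ex_series (fun n => Cmod (cc z n)).
Proof.
  assert (E : ex_series (fun n => Rabs (Cmod (cc z n)))).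
  { apply (ex_series_DAlembert _ 0). lra.
    - intros n H. apply Cmod_eq_0 in H. revert H. apply cc_nz; auto.
    - eapply is_lim_seq_ext; [| apply (ratio_lim z)]. intro n. simpl.
      rewrite (cc_S z Hz), Cmod_mult, Cmod_div by (apply zk_nz; auto).
      pose proof (Cmod_gt_0 (cc z n)) as [P _]. specialize (P (cc_nz z Hz z0 n)).
      assert (Q : 0 < Cmod (z + 1 + RtoC (INR n))) by (apply Cmod_gt_0, zk_nz; auto).
      replace (Cmod (cc z n) * (Cmod z / Cmod (z + 1 + RtoC (INR n))) / Cmod (cc z n))%R
        with (Cmod z / Cmod (z + 1 + RtoC (INR n)))%R by (field; lra).
      rewrite Rabs_pos_eq. reflexivity.
      apply Rmult_le_pos. apply Cmod_ge_0. apply Rlt_le, Rinv_0_lt_compat; auto. }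
  eapply ex_series_ext; [| exact E]. intro n. apply Rabs_pos_eq, Cmod_ge_0.
Qed.

Lemma lim_plus (f g : nat -> C) a b : filterlim f eventually (locally a) ->
  filterlim g eventually (locally b) -> filterlim (fun n => f n + g n) eventually (locally (a+b)).
Proof. intros Hf Hg. exact (filterlim_comp_2 f g Cplus Hf Hg (filterlim_plus a b)). Qed.

Lemma tt_eq z (Hz : forall k, z + RtoC (INR (S k)) <> 0) n :
  tt z n = cc z (S n) * ((z + 1 + RtoC (INR n)) / (RtoC (INR n) + 1)).
Proof. unfold tt, cc. cbn [cpow poch]. rewrite RtoC_INR_S.
  pose proof (poch_nz z Hz n). pose proof (zk_nz z Hz n). pose proof (INR_C_nz n).
  field. auto. Qed.

Lemma tt_bound z (Hz : forall k, z + RtoC (INR (S k)) <> 0) n :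
  (Cmod (tt z n) <= (Cmod z + 1) * Cmod (cc z (S n)))%R.
Proof.
  rewrite (tt_eq z Hz), Cmod_mult, Cmod_div by apply INR_C_nz.
  rewrite <- RtoC_INR_S, Cmod_R, Rabs_pos_eq by apply pos_INR.
  assert (P : 0 < INR (S n)) by (apply lt_0_INR; lia).
  assert (T : (Cmod (z + 1 + RtoC (INR n)) <= Cmod z + INR (S n))%R).
  { replace (z + 1 + RtoC (INR n)) with (z + RtoC (INR (S n))) by (rewrite RtoC_INR_S; ring).
    eapply Rle_trans. apply Cmod_triangle. rewrite Cmod_R, Rabs_pos_eq by apply pos_INR. lra. }
  rewrite Rmult_comm. apply Rmult_le_compat_r. apply Cmod_ge_0.
  apply Rmult_le_reg_r with (INR (S n)); auto. unfold Rdiv. rewrite Rmult_assoc, Rinv_l by lra.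
  assert (1 <= INR (S n)) by (rewrite S_INR; pose proof (pos_INR n); lra).
  pose proof (Cmod_ge_0 z). nra.
Qed.

Lemma tt_lim z (Hz : forall k, z + RtoC (INR (S k)) <> 0) (z0 : z <> 0) :
  filterlim (tt z) eventually (locally (RtoC 0)).
Proof.
  assert (L : is_lim_seq (fun n => Cmod (cc z n)) 0) by (apply ex_series_lim_0, ex_series_cc; auto).
  apply is_lim_seq_incr_1 in L.
  apply (is_lim_seq_scal_l _ (Cmod z + 1)) in L. simpl in L. rewrite Rmult_0_r in L.
  assert (M : is_lim_seq (fun n => Cmod (tt z n)) 0).
  { apply (is_lim_seq_le_le (fun _ => 0%R) (fun n => Cmod (tt z n)) (fun n => ((Cmod z + 1) * Cmod (cc z (S n)))%R) 0); [| apply is_lim_seq_const | exact L].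
    intro n. split. apply Cmod_ge_0. apply tt_bound; auto. }
  change (RtoC 0) with (@zero C_AbelianGroup).
  apply (@filterlim_norm_zero _ _ C_NormedModule).
  all: try exact M. all: try apply eventually_filter.
Qed.

Lemma series_cc z (Hz : forall k, z + RtoC (INR (S k)) <> 0) (z0 : z <> 0) :
  exists S, is_series (cc z) S.
Proof.
  apply (ex_series_le (cc z) (fun n => Cmod (cc z n))).
  - intro n. apply Rle_refl.
  - apply ex_series_cc; auto.
Qed.

Lemma hyp_cc z n : hyp1F1_term 1 (z + 1) z n = cc z n.
Proof.
  unfold hyp1F1_term, cc.
  assert (E : poch 1 n = RtoC (INR (fact n))).
  { induction n. reflexivity. cbn [poch fact]. rewrite IHn. rewrite mult_INR, RtoC_mult, RtoC_INR_S. ring. }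
  rewrite E. assert (INR (fact n) <> 0%R) by (apply not_0_INR, fact_neq_0).
  assert (RtoC (INR (fact n)) <> 0) by (intro H'; apply RtoC_inj in H'; auto).
  (* poch (z+1) n may be zero: handle generally *)
  unfold Cdiv.
  replace (RtoC (INR (fact n)) * / poch (z + 1) n * cpow z n * / RtoC (INR (fact n)))
   with ((RtoC (INR (fact n)) * / RtoC (INR (fact n))) * (cpow z n * / poch (z + 1) n)) by ring.
  rewrite Cinv_r by auto. ring.
Qed.

Lemma part1 z (Hz : forall k, z + RtoC (INR (S k)) <> 0) (z0 : z <> 0) :
  exists v : C,
       cf_converges_to (fun m => - z * (RtoC (INR m) + z - 1))
                       (fun m => RtoC (INR m) + 2 * z + 1) v /\
       is_series (hyp1F1_term 1 (z + 1) z) (1 + z + v).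
Proof.
  destruct (series_cc z Hz z0) as [L0' HS]. set (L0 := (L0' : C)).
  exists (L0 - 1 - z). split.
  - split.
    + exists 1%nat. intros n Hn. destruct n. lia.
      change (fun m => - z * (RtoC (INR m) + z - 1)) with (aa z).
      change (fun m => RtoC (INR m) + 2 * z + 1) with (bb z).
      unfold cfB. rewrite (wallis_closed z Hz). simpl snd. unfold Bn.
      apply Cmult_neq_0. apply INR_S_nz. apply poch_nz; auto.
    + change (fun m => - z * (RtoC (INR m) + z - 1)) with (aa z).
      change (fun m => RtoC (INR m) + 2 * z + 1) with (bb z).
      apply (filterlim_ext_loc (gg z)).
      { exists 1%nat. intros n Hn. destruct n. lia.
        unfold cfA, cfB. rewrite (wallis_closed z Hz). simpl. unfold Bn.
        assert (RtoC (INR (S (S n))) <> 0) by apply INR_S_nz.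
        assert (poch (z+1) (S n) <> 0) by (apply poch_nz; auto).
        field; auto. }
      unfold gg.
      replace (L0 - 1 - z) with (L0 + 0 + - (1) + - z) by ring.
      apply lim_plus. apply lim_plus. apply lim_plus. exact HS. apply tt_lim; auto.
      apply filterlim_const. apply filterlim_const.
  - eapply is_series_ext. intro n. symmetry. apply hyp_cc.
    replace (1 + z + (L0 - 1 - z)) with (L0 : C) by ring. exact HS.
Qed.

Lemma cos_gt_m1 th : (Rabs th < PI)%R -> (-1 < cos th)%R.
Proof.
  intro H. pose proof PI_RGT_0 as Hpi.
  destruct (Rle_or_lt 0 th) as [H0|H0].
  - rewrite Rabs_pos_eq in H by lra. rewrite <- cos_PI.
    apply cos_decreasing_1; lra.
  - rewrite Rabs_left in H by lra. rewrite <- cos_neg, <- cos_PI.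
    apply cos_decreasing_1; lra.
Qed.

Lemma arg_Hz z : abs_arg_lt_pi z -> forall k, z + RtoC (INR (S k)) <> 0.
Proof.
  intros [z0 [th [Hth E]]] k Hk.
  set (r := INR (S k)) in *.
  assert (rpos : (0 < r)%R) by (apply lt_0_INR; lia).
  assert (Ez : z = RtoC (- r)) by (rewrite RtoC_opp; rewrite <- (Cplus_0_l (- RtoC r)), <- Hk; ring).
  rewrite Ez, Cmod_R, Rabs_left in E by lra.
  apply (f_equal fst) in E. simpl in E.
  pose proof (cos_gt_m1 th Hth). nra.
Qed.

Theorem part1_full : forall z : C, abs_arg_lt_pi z ->
     exists v : C,
       cf_converges_to (fun m => - z * (RtoC (INR m) + z - 1))
                       (fun m => RtoC (INR m) + 2 * z + 1) v /\
       is_series (hyp1F1_term 1 (z + 1) z) (1 + z + v).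
Proof. intros z H. apply part1. apply arg_Hz; auto. destruct H; auto. Qed.

Section RealPart.
Local Open Scope R_scope.
Definition KK (N : R) m := INR (fact m) / N ^ (S m) * (exp N - sum_f_R0 (fun j => N ^ j / INR (fact j)) m).

Lemma I0 N : 0 < N -> is_RInt (fun t => (1 - t) ^ 0 * exp (t * N)) 0 1 (KK N 0).
Proof.
  intro HN.
  assert (H := is_RInt_derive (fun t => exp (t * N) / N) (fun t => (1 - t) ^ 0 * exp (t * N)) 0 1).
  unfold KK. simpl sum_f_R0. simpl fact.
  match goal with |- is_RInt _ _ _ ?v => replace v with (minus (exp (1 * N) / N) (exp (0 * N) / N)) end.
  apply H.
  - intros x _. auto_derive. auto. field. lra.
  - intros x _. apply (@ex_derive_continuous R_AbsRing R_NormedModule). auto_derive. auto.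
  - unfold minus, plus, opp; simpl. rewrite Rmult_0_l, Rmult_1_l, exp_0. field. lra.
Qed.

Lemma IBP m N : 0 < N -> is_RInt (fun t => (1-t)^(S m) * exp(t*N) - INR (S m) / N * ((1-t)^m * exp (t*N))) 0 1 (- / N).
Proof.
  intro HN.
  replace (- / N) with (minus ((1-1)^(S m) * exp(1*N) / N) ((1-0)^(S m) * exp(0*N) / N)).
  apply (is_RInt_derive (fun t => (1-t)^(S m) * exp(t*N) / N)).
  - intros x _. auto_derive. auto. change (match m with 0%nat => 1 | S _ => INR m + 1 end) with (INR (S m)). simpl pow. set (y := (1 - x)^m). set (e := exp (x*N)). replace (1 + - x) with (1 - x) by ring. fold y. field. lra.
  - intros x _. apply (@ex_derive_continuous R_AbsRing R_NormedModule). auto_derive. auto.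
  - rewrite Rminus_diag, Rminus_0_r, pow1, pow_i by lia.
    unfold minus, plus, opp; simpl. rewrite !Rmult_0_l, exp_0. field. lra.
Qed.

Lemma Im m N : 0 < N -> is_RInt (fun t => (1 - t) ^ m * exp (t * N)) 0 1 (KK N m).
Proof.
  intro HN. induction m. apply I0; auto.
  assert (H := is_RInt_plus _ _ _ _ _ _ (IBP m N HN) (is_RInt_scal _ _ _ (INR (S m) / N) _ IHm)).
  replace (KK N (S m)) with (plus (- / N) (scal (INR (S m) / N) (KK N m))).
  - eapply is_RInt_ext; [| exact H]. intros x _. unfold plus, scal; simpl. unfold mult; simpl. ring.
  - unfold plus, scal; simpl. unfold mult; simpl. unfold KK. cbn [sum_f_R0 fact].
    rewrite mult_INR. simpl pow. 
    assert (0 < INR (fact m)) by (apply lt_0_INR, lt_O_fact).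
    assert (N ^ m <> 0) by (apply pow_nonzero; lra).
    change (match m with 0%nat => 1 | S _ => INR m + 1 end) with (INR (S m)). rewrite S_INR. pose proof (pos_INR m). field. lra.
Qed.

End RealPart.

Lemma RtoC_cont l : filterlim RtoC (locally l) (locally (RtoC l)).
Proof.
  apply filterlim_locally. intro eps. exists eps. intros y Hy.
  apply (@norm_compat1 C_AbsRing C_NormedModule).
  change (Cmod (RtoC y - RtoC l) < eps)%R.
  rewrite <- RtoC_minus, Cmod_R. exact Hy.
Qed.

Lemma is_series_RtoC (a : nat -> R) l : is_series a l -> is_series (fun k => RtoC (a k)) (RtoC l).
Proof.
  intro H. unfold is_series in *.
  apply (filterlim_ext (fun n => RtoC (sum_n a n))).
  - intro n. induction n. rewrite !sum_O. reflexivity.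
    rewrite !sum_Sn, <- IHn. apply RtoC_plus.
  - eapply filterlim_comp. exact H. apply RtoC_cont.
Qed.

Lemma cpow_R x k : cpow (RtoC x) k = RtoC (x ^ k).
Proof. induction k; simpl. reflexivity. rewrite IHk, RtoC_mult. reflexivity. Qed.

Lemma fact_pos k : (0 < INR (fact k))%R.
Proof. apply lt_0_INR, lt_O_fact. Qed.

Lemma poch_N n k : poch (RtoC (INR n) + 1) k = RtoC (INR (fact (n + k)) / INR (fact n)).
Proof.
  pose proof (fact_pos n). induction k.
  - rewrite Nat.add_0_r. simpl. f_equal. field. lra.
  - cbn [poch]. rewrite IHk. rewrite Nat.add_succ_r. cbn [fact]. rewrite mult_INR, S_INR, plus_INR.
    rewrite <- RtoC_plus, <- RtoC_plus, <- RtoC_mult. f_equal.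
    field. lra.
Qed.

Lemma cc_N n k : cc (RtoC (INR n)) k = RtoC (INR n ^ k / (INR (fact (n + k)) / INR (fact n))).
Proof.
  unfold cc. rewrite poch_N, cpow_R. rewrite (RtoC_div (INR n ^ k)). reflexivity.
  pose proof (fact_pos n). pose proof (fact_pos (n+k)).
  apply Rgt_not_eq. apply Rdiv_lt_0_compat; lra.
Qed.

Definition LL (N : R) (n : nat) : R :=
  (INR (fact n) / N ^ n * (exp N - sum_f_R0 (fun j => N ^ j / INR (fact j)) (n - 1)))%R.

Lemma real_series n : (1 <= n)%nat ->
  is_series (fun k => (INR n ^ k / (INR (fact (n + k)) / INR (fact n)))%R) (LL (INR n) n).
Proof.
  intro Hn. set (N := INR n).
  assert (NP : (0 < N)%R) by (apply lt_0_INR; lia).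
  assert (E : is_series (fun j => (N ^ j / INR (fact j))%R) (exp N)).
  { unfold exp. destruct (exist_exp N) as [l Hl]. simpl.
    unfold exp_in in Hl. apply is_series_Reals in Hl.
    eapply is_series_ext; [| exact Hl]. intro j. simpl. unfold Rdiv. ring. }
  assert (E2 : is_series (fun k => (fun j => (N ^ j / INR (fact j))%R) (n + k)%nat)
             (exp N - sum_f_R0 (fun j => N ^ j / INR (fact j)) (n - 1))%R).
  { apply (is_series_incr_n (fun j => (N ^ j / INR (fact j))%R) n). lia.
    match goal with |- is_series _ ?v => replace v with (exp N) end.
    exact E.
    rewrite sum_n_Reals. replace (Nat.pred n) with (n - 1)%nat by lia. unfold plus; simpl. ring. }
  pose proof (@is_series_scal_l R_AbsRing R_NormedModule (INR (fact n) / N ^ n)%R _ _ E2) as E3.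
  unfold LL. fold N.
  eapply is_series_ext; [| exact E3]. intro k. unfold scal; simpl. unfold mult; simpl.
  rewrite pow_add. pose proof (fact_pos n). pose proof (fact_pos (n + k)).
  assert (N ^ n <> 0)%R by (apply pow_nonzero; lra).
  field. lra.
Qed.

Lemma part2 : forall n : nat, (1 <= n)%nat ->
     exists v : C,
       cf_converges_to (fun m => - RtoC (INR n) * (RtoC (INR m) + RtoC (INR n) - 1))
                       (fun m => RtoC (INR m) + 2 * RtoC (INR n) + 1) v /\
       RtoC (RInt (fun t => ((1 - t) ^ (n - 1) * exp (t * INR n))%R) 0 1)
         = / RtoC (INR n) * (1 + RtoC (INR n) + v).
Proof.
  intros n Hn.
  assert (NP : (0 < INR n)%R) by (apply lt_0_INR; lia).
  assert (Hz : forall k, RtoC (INR n) + RtoC (INR (S k)) <> 0).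
  { intros k H. rewrite <- RtoC_plus in H. apply RtoC_inj in H.
    pose proof (pos_INR (S k)). lra. }
  assert (z0 : RtoC (INR n) <> 0) by (intro H; apply RtoC_inj in H; lra).
  destruct (part1 (RtoC (INR n)) Hz z0) as [v [Hcf Hs]].
  exists v. split. exact Hcf.
  assert (Hs1 : is_series (cc (RtoC (INR n))) (1 + RtoC (INR n) + v)).
  { eapply is_series_ext; [| exact Hs]. intro k. apply hyp_cc. }
  assert (Hs2 : is_series (cc (RtoC (INR n))) (RtoC (LL (INR n) n))).
  { eapply is_series_ext; [| apply is_series_RtoC, real_series; auto].
    intro k. simpl. symmetry. apply cc_N. }
  assert (U : 1 + RtoC (INR n) + v = RtoC (LL (INR n) n)).
  { exact (filterlim_locally_unique _ _ _ Hs1 Hs2). }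
  rewrite U.
  rewrite (is_RInt_unique _ _ _ _ (Im (n - 1) (INR n) NP)).
  rewrite <- RtoC_inv by lra. rewrite <- RtoC_mult. f_equal.
  unfold KK, LL. destruct n as [|m]. lia.
  replace (S m - 1)%nat with m by lia.
  change (fact (S m)) with (S m * fact m)%nat. rewrite mult_INR.
  change (INR (S m) ^ S m)%R with (INR (S m) * INR (S m) ^ m)%R.
  pose proof (fact_pos m). assert (INR (S m) ^ m <> 0)%R by (apply pow_nonzero; lra).
  field. lra.
Qed.

Theorem corollary3p2 :
  (forall z : C, abs_arg_lt_pi z ->
     exists v : C,
       cf_converges_to (fun m => - z * (RtoC (INR m) + z - 1))
                       (fun m => RtoC (INR m) + 2 * z + 1) v /\
       is_series (hyp1F1_term 1 (z + 1) z) (1 + z + v)) /\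
  (forall n : nat, (1 <= n)%nat ->
     exists v : C,
       cf_converges_to (fun m => - RtoC (INR n) * (RtoC (INR m) + RtoC (INR n) - 1))
                       (fun m => RtoC (INR m) + 2 * RtoC (INR n) + 1) v /\
       RtoC (RInt (fun t => ((1 - t) ^ (n - 1) * exp (t * INR n))%R) 0 1)
         = / RtoC (INR n) * (1 + RtoC (INR n) + v)).
Proof. split. apply part1_full. apply part2. Qed.
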